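(* Let $\lambda$ be a Salem number and $n$ a positive integer. Then the positive real number $\sqrt[n]{\lambda}$ has an algebraic conjugate (over $\mathbb{Q}$) of modulus $1$.
   Context: A Salem number is a real algebraic integer $\lambda>1$ all of whose other conjugates over $\mathbb{Q}$ have modulus at most $1$, with at least one conjugate of modulus exactly $1$. *)

(* Defs.v *)
From mathcomp Require Import all_boot all_order all_algebra all_field.
Set Implicit Arguments. Unset Strict Implicit. Unset Printing Implicit Defensive.
Import Order.TTheory GRing.Theory Num.Theory.
Local Open Scope ring_scope.

(* Algebraic numbers are modelled in algC (algebraic closure of Q inside C).
   [alg_conjugate x y] : y is an algebraic conjugate of x over Q, i.e. a root
   of the minimal polynomial of x over Q. *)
Definition alg_conjugate (x y : algC) : bool := root (minCpoly x) y.

Definition salem (l : algC) : Prop :=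
  [/\ l \is Creal, 1 < l, l \in Aint,
      (forall y, alg_conjugate l y -> y != l -> `|y| <= 1)
    & exists y, alg_conjugate l y /\ `|y| = 1].

(* Main.v *)
From HB Require Import structures.
Require Import Defs.
From mathcomp Require Import all_boot all_order all_algebra all_field.
Import Order.TTheory GRing.Theory Num.Theory.
Local Open Scope ring_scope.

Lemma conj_aut {x y : algC} : root (minCpoly x) y ->
  exists nu : {rmorphism algC -> algC}, nu x = y.
Proof.
move=> rxy.
have [rs Drs] := closed_field_poly_normal (minCpoly x).
rewrite (monicP (minCpoly_monic x)) scale1r in Drs.
have [Qn [QnC [s1 Ds1 genQn]]] := num_field_exists rs.
have xrs : x \in rs by rewrite -root_prod_XsubC -Drs root_minCpoly.
have yrs : y \in rs by rewrite -root_prod_XsubC -Drs.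
have [x' _ Dx] : exists2 x', x' \in s1 & QnC x' = x.
  by move: xrs; rewrite -Ds1 => /mapP[x' ? ->]; exists x'.
have [y' _ Dy] : exists2 y', y' \in s1 & QnC y' = y.
  by move: yrs; rewrite -Ds1 => /mapP[y' ? ->]; exists y'.
have [q [Dq mon_q] min_q] := minCpolyP x.
have Sinj_poly (p : {poly rat}) :
  map_poly QnC (map_poly (in_alg Qn) p) = (map_poly ratr) p.
  rewrite -map_poly_comp; apply: eq_map_poly => a.
  by rewrite /= rmorphZ_num rmorph1 mulr1.
have [q1 Dq1] : exists q1 : {poly rat}, minPoly 1 x' = map_poly (in_alg Qn) q1.
  have aP i: (minPoly 1 x')`_i \in 1%VS.
    by apply/polyOverP; apply: minPolyOver.
  have{aP} a_ i := sig_eqW (vlineP _ _ (aP i)).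
  exists (\poly_(i < size (minPoly 1 x')) sval (a_ i)).
  apply/polyP=> i; rewrite coef_map coef_poly /=.
  case: ifP => [_|/negbT]; last first.
    by rewrite -leqNgt => /(nth_default 0) ->; rewrite scale0r.
  by case: (a_ i) => a /= ->.
have ry' : root (map_poly \1%VF (minPoly 1 x')) y'.
  rewrite map_poly_id => [|? _]; last by rewrite id_lfunE.
  rewrite -(fmorph_root QnC) Dq1 Sinj_poly Dy.
  have : root ((map_poly ratr) q1) x by rewrite -Sinj_poly -Dq1 -Dx fmorph_root root_minPoly.
  rewrite min_q => /dvdpP[r1 ->]; rewrite rmorphM rootM /= -Dq rxy orbT //.
have homf : kHom 1 <<1; x'>> (kHomExtend 1 \1 x' y').
  by apply: kHomExtendP; rewrite ?kHom1 //.
have Kq : map_poly (in_alg Qn) q \is a polyOver 1%VS by apply/polyOver1P; exists q.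
have split : splittingFieldFor <<1; x'>>%AS (map_poly (in_alg Qn) q) fullv.
  exists s1.
    suff -> : \prod_(z <- s1) ('X - z%:P) = map_poly (in_alg Qn) q by apply: eqpxx.
    apply: (map_poly_inj QnC); rewrite Sinj_poly -Dq Drs -Ds1 rmorph_prod big_map.
    by apply: eq_bigr => z _; rewrite rmorphB /= map_polyX map_polyC.
  by apply/eqP; rewrite eqEsubv subvf /= -genQn adjoin_seqSl // sub1v.
have [g homg Dg] := kHom_extends (sub1v _) homf Kq split.
have gx : g x' = y'.
  by rewrite -Dg ?memv_adjoin // (kHomExtend_val (kHom1 1 1)).
have gm : monoid_morphism g by apply/kHom_monoid_morphism.
pose gmM := GRing.isMonoidMorphism.Build _ _ g gm.
pose gRM : {rmorphism _ -> _} := HB.pack (fun_of_lfun g) gmM.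
have [nu Dnu] := extend_algC_subfield_aut QnC gRM.
by exists nu; rewrite -Dx -Dnu /= gx.
Qed.

Theorem mainTheorem3 (l : algC) (n : nat) :
  salem l -> (0 < n)%N ->
  forall r : algC, r \is Creal -> 0 < r -> r ^+ n = l ->
  exists z : algC, alg_conjugate r z /\ `|z| = 1.
Proof.
move=> [lR l1 lA _ [y [cy y1]]] n0 r rR r0 rn.
have [nu Dnu] := conj_aut cy.
exists (nu r); split.
  by rewrite /alg_conjugate -(minCpoly_aut nu r) root_minCpoly.
have h : `|nu r| ^+ n = 1 by rewrite -normrX -rmorphXn rn Dnu y1.
by apply/eqP; rewrite -(pexpr_eq1 n0) ?normr_ge0 // h.
Qed.
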